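(* For $m,l,r\in\mathbb{N}$ with $l\le m$ and $1\le r\le m$, \begin{align*} x^{-l}\Delta^{(-m-1)}(-t^2)y^{-r}&=q^{2l}[m+1]_q\,t^2W^-(q^mt^2)\star x^{-l}\Delta^{(-m)}(-q^{-1}t^2)y^{1-r}\\ &\quad+q^{l-1}[l]_q[m+1]_q\,t^2G(q^mt^2)\star x^{1-l}\Delta^{(-m)}(-q^{-1}t^2)y^{1-r},\\ y^{-l}\widetilde\Delta^{(-m-1)}(-t^2)x^{-r}&=q^{2l}[m+1]_q\,t^2W^+(q^mt^2)\star y^{-l}\widetilde\Delta^{(-m)}(-q^{-1}t^2)x^{1-r}\\ &\quad+q^{l-1}[l]_q[m+1]_q\,t^2\widetilde G(q^mt^2)\star y^{1-l}\widetilde\Delta^{(-m)}(-q^{-1}t^2)x^{1-r}. \end{align*}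
   Context: $\mathbb{F}$ is a field of characteristic zero, $q\in\mathbb{F}$ nonzero and not a root of unity. $[n]_q=\frac{q^n-q^{-n}}{q-q^{-1}}$. $\mathbb{V}$ is the free algebra on letters $x,y$ with basis the words ($\mathbf 1$ the empty word). The $q$-shuffle product $\star$ on $\mathbb{V}$ is the bilinear product with $\mathbf 1\star v=v\star\mathbf 1=v$ and, for nonempty words $u=u_1\cdots u_r$, $v=v_1\cdots v_s$, $u\star v=u_1((u_2\cdots u_r)\star v)+v_1(u\star(v_2\cdots v_s))q^{\langle v_1,u_1\rangle+\dots+\langle v_1,u_r\rangle}$ (juxtaposition = concatenation), where $\langle x,x\rangle=\langle y,y\rangle=2$, $\langle x,y\rangle=\langle y,x\rangle=-2$. It is extended to formal power series in the indeterminate $t$ coefficientwise (Cauchy product). Generating functions: $W^-(t)=\sum_{n\ge0}x(yx)^nt^n$, $W^+(t)=\sum_{n\ge0}y(xy)^nt^n$, $\widetilde G(t)=\sum_{n\ge0}(xy)^nt^n$, $G(t)=\sum_{n\ge0}(yx)^nt^n$ (with $(xy)^0=(yx)^0=\mathbf 1$); $W^-(q^mt^2)$ denotes substitution of $q^mt^2$ for $t$, etc. $\bar x=1,\bar y=-1$; a word $a_1\cdots a_n$ is Catalan if $\bar a_1+\dots+\bar a_i\ge0$ ($i<n$) and $\bar a_1+\dots+\bar a_n=0$; $\mathrm{Cat}_n$ = Catalan words of length $2n$. $\Delta^{(k)}_n=\sum_{a_1\cdots a_{2n}\in\mathrm{Cat}_n}\prod_{i=1}^{2n}[\bar a_1+\dots+\bar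 a_{i-1}+k(\bar a_i+1)/2]_q\,a_1\cdots a_{2n}$, $\Delta^{(k)}(t)=\sum_n\Delta^{(k)}_nt^n$; $\widetilde\Delta^{(k)}_n$ is obtained from $\Delta^{(k)}_n$ by interchanging $x,y$ in every word, $\widetilde\Delta^{(k)}(t)=\sum_n\widetilde\Delta^{(k)}_nt^n$. Deletion: $x^{-1}w$ deletes a leading $x$ of a word $w$ (result $0$ if $w$ does not start with $x$, including $w=\mathbf 1$); $y^{-1}w$, $wx^{-1}$, $wy^{-1}$ analogously (leading $y$, trailing $x$, trailing $y$); extended linearly and coefficientwise; exponent $-k<0$ means $k$-fold application, exponent $0$ the identity, and a positive exponent $x^{k}w$ (resp. $y^kw$) means concatenation with $x^k$ (resp. $y^k$) on the left (this only occurs for $l=0$, where that summand has the factor $[0]_q=0$). *)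

(* Defs.v *)
From HB Require Import structures.
From mathcomp Require Import all_boot all_order all_algebra.
Set Implicit Arguments. Unset Strict Implicit. Unset Printing Implicit Defensive.
Import Order.TTheory GRing.Theory Num.Theory.
Local Open Scope ring_scope.

Inductive letter := lx | ly.
Definition letter_eqb (a b : letter) :=
  match a, b with lx, lx | ly, ly => true | _, _ => false end.
Lemma letter_eqP : Equality.axiom letter_eqb.
Proof. by case; case; constructor. Qed.
HB.instance Definition _ := hasDecEq.Build letter letter_eqP.

Definition word := seq letter.
Definition swap_letter (a : letter) := if a is lx then ly else lx.

Definition pairing (a b : letter) : int := if a == b then 2 else -2.
Definition bar (a : letter) : int := if a is lx then 1 else -1.
Definition psum (w : word) : int := \sum_(a <- w) bar a.

Definition catalan (w : word) : bool :=
  all (fun i => 0 <= psum (take i w)) (iota 1 (size w).-1) && (psum w == 0).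

Fixpoint allwords (n : nat) : seq word :=
  if n is n'.+1 then flatten [seq [:: lx :: w; ly :: w] | w <- allwords n']
  else [:: [::]].

Section Defs.
Variable F : fieldType.

(* Elements of V: finite formal linear combinations of words,
   compared through their coefficient function [coef]. *)
Definition vec := seq (F * word).
Definition coef (v : vec) (w : word) : F := \sum_(p <- v | p.2 == w) p.1.
Definition vscale (c : F) (v : vec) : vec := [seq (c * p.1, p.2) | p <- v].
Definition lcons (a : letter) (v : vec) : vec := [seq (p.1, a :: p.2) | p <- v].

Variable q : F.

Definition qint (n : int) : F := (q ^ n - q ^ (- n)) / (q - q^-1).

Fixpoint wshuffle (u : word) : word -> vec :=
  match u with
  | [::] => fun v => [:: (1, v)]
  | u1 :: u' => fix shv (v : word) : vec :=
      match v with
      | [::] => [:: (1, u)]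
      | v1 :: v' =>
          lcons u1 (wshuffle u' v) ++
          vscale (q ^ (\sum_(a <- u) pairing v1 a)) (lcons v1 (shv v'))
      end
  end.

Definition vshuffle (u v : vec) : vec :=
  flatten [seq vscale (a.1 * b.1) (wshuffle a.2 b.2) | a <- u, b <- v].

(* Deletion / concatenation operators  a^e w, w a^e  with e : int *)
Definition ldel1 (a : letter) (v : vec) : vec :=
  [seq (p.1, behead p.2) | p <- v & ohead p.2 == Some a].
Definition rdel1 (a : letter) (v : vec) : vec :=
  [seq (p.1, rev (behead (rev p.2))) | p <- v & ohead (rev p.2) == Some a].
Definition lexp (a : letter) (e : int) (v : vec) : vec :=
  match e with
  | Posz n => [seq (p.1, nseq n a ++ p.2) | p <- v]
  | Negz n => iter n.+1 (ldel1 a) v   (* e = -(n+1) *)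
  end.
Definition rexp (a : letter) (e : int) (v : vec) : vec :=
  match e with
  | Posz n => [seq (p.1, p.2 ++ nseq n a) | p <- v]
  | Negz n => iter n.+1 (rdel1 a) v
  end.

(* coefficient prod_i [abar_1+...+abar_{i-1} + k(abar_i+1)/2]_q *)
Fixpoint dco (k s : int) (w : word) : F :=
  match w with
  | [::] => 1
  | a :: w' => qint (s + (if a is lx then k else 0)) * dco k (s + bar a) w'
  end.

Definition Delta (k : int) (n : nat) : vec :=
  [seq (dco k 0 w, w) | w <- allwords (2 * n) & catalan w].
Definition Deltat (k : int) (n : nat) : vec :=
  [seq (p.1, map swap_letter p.2) | p <- Delta k n].

(* formal power series in t with coefficients in V *)
Definition series := nat -> vec.

Definition Wm : series := fun n => [:: (1, lx :: flatten (nseq n [:: ly; lx]))].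
Definition Wp : series := fun n => [:: (1, ly :: flatten (nseq n [:: lx; ly]))].
Definition Gt : series := fun n => [:: (1, flatten (nseq n [:: lx; ly]))].
Definition G  : series := fun n => [:: (1, flatten (nseq n [:: ly; lx]))].
Definition DeltaS (k : int) : series := Delta k.
Definition DeltatS (k : int) : series := Deltat k.

Definition sadd (A B : series) : series := fun n => A n ++ B n.
Definition sscale (c : F) (A : series) : series := fun n => vscale c (A n).
Definition smap (f : vec -> vec) (A : series) : series := fun n => f (A n).
Definition sshuffle (A B : series) : series :=
  fun n => flatten [seq vshuffle (A i) (B (n - i)%N) | i <- iota 0 n.+1].
(* A(c t^2) *)
Definition subst2 (c : F) (A : series) : series :=
  fun n => if odd n then [::] else vscale (c ^+ n./2) (A n./2).
(* t^2 A(t) *)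
Definition mult_t2 (A : series) : series :=
  fun n => if (n < 2)%N then [::] else A (n - 2)%N.

Definition series_eq (A B : series) : Prop :=
  forall n w, coef (A n) w = coef (B n) w.

End Defs.

(* Main.v *)
Require Import Defs.
From HB Require Import structures.
From mathcomp Require Import all_boot all_order all_algebra.
From mathcomp Require Import ring zify.
Import Order.TTheory GRing.Theory Num.Theory.
Local Open Scope ring_scope.

Section Basic.
Variable F : fieldType.
Variable q : F.

Lemma coef_nil (w : word) : coef ([::] : vec F) w = 0.
Proof. by rewrite /coef big_nil. Qed.

Lemma coef_cat (u v : vec F) w : coef (u ++ v) w = coef u w + coef v w.
Proof. by rewrite /coef big_cat. Qed.

Lemma coef_cons (p : F * word) (v : vec F) w :
  coef (p :: v) w = (if p.2 == w then p.1 else 0) + coef v w.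
Proof. by rewrite /coef big_cons; case: ifP; rewrite ?add0r. Qed.

Lemma coef_scale c (v : vec F) w : coef (vscale c v) w = c * coef v w.
Proof.
rewrite /coef /vscale big_map mulr_sumr; exact: eq_bigr.
Qed.

Lemma coef_lcons_nil a (v : vec F) : coef (lcons a v) [::] = 0.
Proof. by rewrite /coef /lcons big_map big_pred0. Qed.

Lemma coef_lcons a (v : vec F) c w :
  coef (lcons a v) (c :: w) = if a == c then coef v w else 0.
Proof.
rewrite /coef /lcons big_map.
case: eqP => [->|ne].
  by apply: eq_bigl => p /=; rewrite eqseq_cons eqxx.
by rewrite big_pred0 // => p /=; rewrite eqseq_cons; case: eqP.
Qed.

Lemma coef_ldel1 a (v : vec F) w : coef (ldel1 a v) w = coef v (a :: w).
Proof.
rewrite /coef /ldel1 big_map big_filter_cond /=.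
apply: eq_bigl => -[c s] /=; case: s => [|b s] //=.
Qed.

Lemma coef_single (c : F) (u w : word) : coef [:: (c, u)] w = if u == w then c else 0.
Proof. by rewrite coef_cons coef_nil addr0. Qed.

Definition pw (c : letter) (u : word) : int := \sum_(a <- u) pairing c a.

Fixpoint shf (u : word) (f : word -> F) (w : word) : F :=
  match w with
  | [::] => if u is [::] then f [::] else 0
  | c :: w' => (if u is a :: u' then (if a == c then shf u' f w' else 0) else 0)
               + q ^ pw c u * shf u (fun v => f (c :: v)) w'
  end.

Lemma shf_ext u f g w : (forall v, f v = g v) -> shf u f w = shf u g w.
Proof.
elim: w u f g => [|c w IH] u f g E /=; first by case: u.
congr (_ + _ * _); last by apply: IH.
by case: u => // a u; case: eqP => // _; apply: IH.
Qed.

Lemma shf_scale u f k w : shf u (fun v => k * f v) w = k * shf u f w.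
Proof.
elim: w u f => [|c w IH] u f /=; first by case: u; rewrite ?mulr0.
rewrite mulrDr IH mulrCA; congr (_ + _).
by case: u => [|a u]; rewrite ?mulr0 //; case: eqP; rewrite ?mulr0.
Qed.

Lemma shf_zero u f w : (forall v, f v = 0) -> shf u f w = 0.
Proof.
move=> H; rewrite (@shf_ext u f (fun v => 0 * f v)) ?shf_scale ?mul0r //.
by move=> v; rewrite H mul0r.
Qed.

Lemma coef_wsh_nil u v :
  coef (wshuffle q u v) [::] = if (u == [::]) && (v == [::]) then 1 else 0.
Proof.
case: u => [|a u] /=; first by rewrite coef_single; case: v.
case: v => [|b v] /=; first by rewrite coef_single.
by rewrite coef_cat coef_scale !coef_lcons_nil mulr0 addr0.
Qed.

Lemma coef_wsh_cons u v c w :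
  coef (wshuffle q u v) (c :: w) =
  (if u is a :: u' then (if a == c then coef (wshuffle q u' v) w else 0) else 0)
  + (if v is b :: v' then (if b == c then q ^ pw b u * coef (wshuffle q u v') w else 0) else 0).
Proof.
case: u => [|a u] /=.
  rewrite coef_single add0r; case: v => [|b v] //=.
  rewrite coef_single eqseq_cons /pw big_nil expr0z mul1r.
  by case: eqP => //; rewrite andbF.
case: v => [|b v] /=.
  rewrite coef_single eqseq_cons addr0; case: eqP => // _.
  by case: u => [|a' u] /=; rewrite coef_single.
rewrite coef_cat coef_scale !coef_lcons; congr (_ + _).
by case: eqP; rewrite ?mulr0.
Qed.

Lemma coef_vsh (U V : vec F) w :
  coef (vshuffle q U V) w = \sum_(a <- U) \sum_(b <- V) a.1 * b.1 * coef (wshuffle q a.2 b.2) w.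
Proof.
rewrite /vshuffle; elim: U => [|a U IH] /=; first by rewrite coef_nil big_nil.
rewrite flatten_cat coef_cat IH big_cons; congr (_ + _).
clear IH; elim: V => [|b V IHV] /=; first by rewrite coef_nil big_nil.
by rewrite coef_cat coef_scale IHV big_cons.
Qed.

Lemma sum_wsh_shf u (V : vec F) w :
  \sum_(b <- V) b.1 * coef (wshuffle q u b.2) w = shf u (coef V) w.
Proof.
elim: w u V => [|c w IH] u V /=.
  under eq_bigr => b _ do rewrite coef_wsh_nil.
  case: u => [|a u] /=; last by rewrite big1 // => b _; rewrite mulr0.
  by rewrite /coef [RHS]big_mkcond; apply: eq_bigr => b _; case: eqP; rewrite ?mulr1 ?mulr0.
under eq_bigr => b _ do rewrite coef_wsh_cons mulrDr.
rewrite big_split /=; congr (_ + _).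
  case: u => [|a u]; first by rewrite big1 // => b _; rewrite mulr0.
  case: eqP => _; last by rewrite big1 // => b _; rewrite mulr0.
  by rewrite IH.
rewrite -(@shf_ext u (coef (ldel1 c V))); last by move=> v; rewrite coef_ldel1.
rewrite -IH mulr_sumr /ldel1 big_map big_filter [RHS]big_mkcond /=.
apply: eq_bigr => -[k [|b s]] _ //=; rewrite ?mulr0 //.
case: eqP => [->|ne]; last by rewrite mulr0; case: eqP => // -[].
by rewrite eqxx mulrCA.
Qed.

Lemma coef_vsh1 (c : F) u (V : vec F) w :
  coef (vshuffle q [:: (c, u)] V) w = c * shf u (coef V) w.
Proof.
rewrite coef_vsh big_cons big_nil addr0 /= -sum_wsh_shf mulr_sumr.
by apply: eq_bigr => b _; rewrite mulrA.
Qed.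

End Basic.
Arguments shf {F} q u f w.

Section Key.
Variable F : fieldType.
Variable q : F.
Hypothesis hq : q != 0.
Hypothesis hq2 : q * q - 1 != 0.

Lemma psum_cons a w : psum (a :: w) = bar a + psum w.
Proof. by rewrite /psum big_cons. Qed.
Lemma psum_nil : psum [::] = 0.
Proof. by rewrite /psum big_nil. Qed.

Definition Pf (k a b : int) (N : nat) (v : word) : F :=
  if (count_mem lx v == N) && (a + psum v == b) then dco q k a v else 0.

Lemma Pf_nil k a b N : Pf k a b N [::] = if (N == 0)%N && (a == b) then 1 else 0.
Proof. by rewrite /Pf psum_nil addr0 /= eq_sym. Qed.

Lemma Pf_x k a b N v :
  Pf k a b N (lx :: v) = if N is N'.+1 then qint q (a + k) * Pf k (a + 1) b N' v else 0.
Proof.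
rewrite /Pf psum_cons /= add1n addrA.
case: N => [|N] /=; first by [].
rewrite eqSS; case: ifP; rewrite ?mulr0 //.
Qed.

Lemma Pf_y k a b N v :
  Pf k a b N (ly :: v) = qint q a * Pf k (a - 1) b N v.
Proof.
rewrite /Pf psum_cons /= add0n addrA addr0.
by case: ifP; rewrite ?mulr0.
Qed.

Definition Wi (i : nat) : word := lx :: flatten (nseq i [:: ly; lx]).
Definition Gi (i : nat) : word := flatten (nseq i [:: ly; lx]).

Lemma pw_Gi c i : pw c (Gi i) = 0.
Proof.
elim: i => [|i IH]; first by rewrite /pw big_nil.
rewrite /Gi /= /pw !big_cons -/(pw c _) -/(Gi i) IH addr0.
by clear IH; case: c.
Qed.

Lemma pw_Wi_x i : pw lx (Wi i) = 2.
Proof. by rewrite /pw big_cons -/(pw lx _) -/(Gi i) pw_Gi addr0. Qed.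

Lemma pw_Wi_y i : pw ly (Wi i) = -2.
Proof. by rewrite /pw big_cons -/(pw ly _) -/(Gi i) pw_Gi addr0. Qed.

Lemma shf_Wi_nil i f : shf q (Wi i) f [::] = 0.
Proof. by []. Qed.

Lemma shf_Gi_nil i f : shf q (Gi i) f [::] = if i == 0%N then f [::] else 0.
Proof. by case: i. Qed.

Lemma shf_Wi_x i f w :
  shf q (Wi i) f (lx :: w) = shf q (Gi i) f w + q ^ 2 * shf q (Wi i) (fun v => f (lx :: v)) w.
Proof. by rewrite /= pw_Wi_x. Qed.

Lemma shf_Wi_y i f w :
  shf q (Wi i) f (ly :: w) = q ^ (-2) * shf q (Wi i) (fun v => f (ly :: v)) w.
Proof. by rewrite /= pw_Wi_y add0r. Qed.

Lemma shf_Gi_x i f w :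
  shf q (Gi i) f (lx :: w) = shf q (Gi i) (fun v => f (lx :: v)) w.
Proof.
have -> : shf q (Gi i) f (lx :: w) =
  (if Gi i is a :: u' then (if a == lx then shf q u' f w else 0) else 0)
  + q ^ pw lx (Gi i) * shf q (Gi i) (fun v => f (lx :: v)) w by [].
by rewrite pw_Gi expr0z mul1r; case: i => [|i] /=; rewrite add0r.
Qed.

Lemma shf_Gi_y i f w :
  shf q (Gi i) f (ly :: w) =
  (if i is i'.+1 then shf q (Wi i') f w else 0) + shf q (Gi i) (fun v => f (ly :: v)) w.
Proof.
have -> : shf q (Gi i) f (ly :: w) =
  (if Gi i is a :: u' then (if a == ly then shf q u' f w else 0) else 0)
  + q ^ pw ly (Gi i) * shf q (Gi i) (fun v => f (ly :: v)) w by [].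
by rewrite pw_Gi expr0z mul1r; case: i.
Qed.

Lemma shf_Pf_x u k a b N w :
  shf q u (fun v => Pf k a b N (lx :: v)) w =
  if N is N'.+1 then qint q (a + k) * shf q u (Pf k (a + 1) b N') w else 0.
Proof.
case: N => [|N].
  by apply: shf_zero => v; rewrite Pf_x.
by rewrite -shf_scale; apply: shf_ext => v; rewrite Pf_x.
Qed.

Lemma shf_Pf_y u k a b N w :
  shf q u (fun v => Pf k a b N (ly :: v)) w = qint q a * shf q u (Pf k (a - 1) b N) w.
Proof. by rewrite -shf_scale; apply: shf_ext => v; rewrite Pf_y. Qed.

End Key.
Arguments Pf {F} q k a b N v.
Section C.

Variable F : fieldType.
Variable q : F.
Hypothesis hq : q != 0.
Hypothesis hq2 : q * q - 1 != 0.

Definition alpha (m a : int) (N i : nat) : F :=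
  (-1) ^+ i.+1 * q ^ ((m + 1) * i%:Z - N%:Z + a + 1) * qint q (m - a + 1).
Definition beta (m a : int) (N i : nat) : F :=
  (-1) ^+ i * q ^ ((m + 1) * i%:Z - N%:Z) * qint q a.

Ltac qnorm := rewrite /alpha /beta /qint;
  rewrite ?intS ?(mulrDl, mulrDr, opprD, opprK, mulNr, mulrN, mul1r, mulr1);
  rewrite ?expfzDr //; rewrite -?invr_expz ?expr1z ?exprS -?exprnP.

Ltac qfield := field; rewrite ?hq ?hq2 ?expfz_neq0 ?expf_neq0 //.

Lemma C1 m a N i : alpha m a N.+1 i * q ^ 2 * qint q (a + - m) =
   qint q (a + (- m - 1)) * alpha m (a + 1) N i.
Proof. qnorm. qfield. Qed.

Lemma C2 m a N i : alpha m a N.+1 i + beta m a N.+1 i * qint q (a - 1 + - m) =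
   qint q (a + (- m - 1)) * beta m (a + 1) N i.
Proof. qnorm. qfield. Qed.

Lemma C3 m a N i : alpha m a N i * q ^ (-2) * qint q a + beta m a N i.+1 =
   qint q a * alpha m (a - 1) N i.
Proof. qnorm. qfield. Qed.

Lemma C4 m a N i : beta m a N i * qint q (a - 1) = qint q a * beta m (a - 1) N i.
Proof. qnorm. qfield. Qed.

Lemma C0 m a : beta m a 0 0 = qint q a.
Proof. qnorm. rewrite ?mulr0 ?expr0z ?expr0 ?invr1 ?mulr1 ?mul1r. qfield. Qed.

Lemma key (m b : int) w : forall (a : int) (N : nat),
  qint q b * Pf q (- m - 1) a b N w =
  \sum_(0 <= i < N) alpha m a N i * shf q (Wi i) (Pf q (- m) a (b - 1) (N - i.+1)) w +
  \sum_(0 <= i < N.+1) beta m a N i * shf q (Gi i) (Pf q (- m) (a - 1) (b - 1) (N - i)) w.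
Proof.
elim: w => [|c w IH] a N.
  rewrite big1 ?add0r; last by move=> i _; rewrite shf_Wi_nil mulr0.
  rewrite big_nat_recl // shf_Gi_nil /= subn0 big1 ?addr0; last first.
    by move=> i _; rewrite ?shf_Gi_nil /= mulr0.
  rewrite !Pf_nil (inj_eq (addIr _)).
  case: (N =P 0)%N => [->|_] /=; last by rewrite !mulr0.
  by case: (a =P b) => [->|_]; rewrite ?mulr0 // C0.
case: c.
  rewrite Pf_x; case: N => [|N].
    rewrite mulr0 big_geq // add0r big_nat1 shf_Gi_x shf_Pf_x.
    by rewrite mulr0.
  under eq_bigr => i _ do rewrite shf_Wi_x shf_Pf_x subSS mulrDr.
  under [X in _ = _ + X]eq_bigr => i _ do rewrite shf_Gi_x shf_Pf_x.
  rewrite mulrCA IH.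
  rewrite big_split /=.
  rewrite [X in _ = _ + X + _]big_nat_recr //= subnn mulr0 mulr0 addr0.
  rewrite [X in _ = _ + _ + X]big_nat_recr //= subnn mulr0 addr0.
  rewrite [X in _ = _ + X + _](@eq_big_nat _ _ _ 0 N _ (fun i => alpha m a N.+1 i * (q ^ 2 *
       (qint q (a + - m) * shf q (Wi i) (Pf q (- m) (a + 1) (b - 1) (N - i.+1)) w)))); last first.
    by move=> i /andP[_ Hi]; rewrite -(subnSK Hi).
  rewrite [X in _ = _ + _ + X](@eq_big_nat _ _ _ 0 N.+1 _ (fun i => beta m a N.+1 i *
       (qint q (a - 1 + - m) * shf q (Gi i) (Pf q (- m) a (b - 1) (N - i)) w))); last first.
    by move=> i /andP[_ Hi]; rewrite subSn // subrK.
  rewrite addrK -addrA addrCA mulrDr; congr (_ + _).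
    rewrite mulr_sumr; apply: eq_bigr => i _.
    by rewrite [LHS]mulrA -C1; ring.
  rewrite -big_split mulr_sumr; apply: eq_bigr => i _ /=.
  by rewrite [LHS]mulrA -C2; ring.
under eq_bigr => i _ do rewrite shf_Wi_y shf_Pf_y.
under [X in _ = _ + X]eq_bigr => i _ do rewrite shf_Gi_y shf_Pf_y mulrDr.
rewrite Pf_y mulrCA IH.
rewrite big_split /= [X in _ = _ + (X + _)]big_nat_recl //= mulr0 add0r addrA -big_split /=.
rewrite mulrDr !mulr_sumr; congr (_ + _).
  apply: eq_bigr => i _.
  by rewrite [LHS]mulrA -C3; ring.
apply: eq_bigr => i _.
by rewrite [LHS]mulrA -C4; ring.
Qed.
End C.

Section Util.
Variable F : fieldType.
Variable q : F.

Lemma nseq_cat_cons (a : letter) n (w : word) : nseq n a ++ a :: w = a :: (nseq n a ++ w).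
Proof. by elim: n => //= n ->. Qed.

Lemma coef_iter_ldel1 a n (V : vec F) w : coef (iter n (ldel1 a) V) w = coef V (nseq n a ++ w).
Proof.
elim: n w => [|n IH] w //=.
by rewrite coef_ldel1 IH nseq_cat_cons.
Qed.

Lemma coef_map_id (V : vec F) w : coef [seq (p.1, p.2) | p <- V] w = coef V w.
Proof. by rewrite /coef big_map; apply: eq_bigl => -[]. Qed.

Lemma coef_lexpN a (l : nat) (V : vec F) w :
  coef (lexp a (- l%:Z) V) w = coef V (nseq l a ++ w).
Proof.
case: l => [|l]; first by rewrite /lexp /= coef_map_id.
have -> : - (l.+1)%:Z = Negz l by [].
by rewrite /lexp coef_iter_ldel1.
Qed.

Lemma coef_rdel1 a (V : vec F) w : coef (rdel1 a V) w = coef V (rcons w a).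
Proof.
rewrite /coef /rdel1 big_map big_filter_cond /=.
apply: eq_bigl => -[c s] /=.
case/lastP: s => [|s b] /=; first by case: w.
by rewrite rev_rcons /= revK eqseq_rcons andbC.
Qed.

Lemma coef_iter_rdel1 a n (V : vec F) w : coef (iter n (rdel1 a) V) w = coef V (w ++ nseq n a).
Proof.
elim: n w => [|n IH] w /=; first by rewrite cats0.
by rewrite coef_rdel1 IH cat_rcons.
Qed.

Lemma coef_rexpN a (r : nat) (V : vec F) w :
  coef (rexp a (- r%:Z) V) w = coef V (w ++ nseq r a).
Proof.
case: r => [|r].
  rewrite /rexp /= cats0 /coef big_map; apply: eq_bigl => -[c s] /=.
  by rewrite cats0.
have -> : - (r.+1)%:Z = Negz r by [].
by rewrite /rexp coef_iter_rdel1.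
Qed.

Lemma count_allwords n (w : word) : count_mem w (allwords n) = (size w == n).
Proof.
elim: n w => [|n IH] w; first by case: w.
rewrite /= count_flatten -map_comp.
case: w => [|c w] /=.
  elim: (allwords n) => //.
rewrite eqSS -IH; elim: (allwords n) => [|v s IHs] //=.
rewrite IHs; congr (_ + _)%N.
by clear IHs; case: c; rewrite !eqseq_cons /=; case: (v == w).
Qed.

Lemma sum_eq_const (s : seq word) w (X : F) :
  \sum_(v <- s | v == w) X = (count_mem w s)%:R * X.
Proof.
elim: s => [|v s IH]; first by rewrite big_nil mul0r.
rewrite big_cons IH /= natrD mulrDl eq_sym.
by case: eqP => _; rewrite ?mul1r ?mul0r ?add0r.
Qed.

Lemma psum_cat u v : psum (u ++ v) = psum u + psum v.
Proof. by rewrite /psum big_cat. Qed.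

Lemma psum_count v : psum v = (count_mem lx v)%:Z - (count_mem ly v)%:Z.
Proof.
elim: v => [|a v IH]; first by rewrite psum_nil.
rewrite psum_cons IH; case: a => /=; lia.
Qed.

Lemma size_count v : size v = (count_mem lx v + count_mem ly v)%N.
Proof. elim: v => [|a v IH] //=; case: a => /=; by rewrite IH ?add0n ?add1n ?addSn ?addnS. Qed.

Lemma qint0 : qint q 0 = 0.
Proof. by rewrite /qint oppr0 subrr mul0r. Qed.

Lemma qint_opp z : qint q (- z) = - qint q z.
Proof. by rewrite /qint opprK -mulNr opprB. Qed.

Lemma dco_nonneg k (s : int) w : 0 <= s -> dco q k s w != 0 ->
  forall i, 0 <= s + psum (take i w).
Proof.
elim: w s => [|a w IH] s hs /=.
  by move=> _ i; rewrite psum_nil addr0.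
rewrite mulf_eq0 negb_or => /andP[h1 h2] [|i] /=; first by rewrite psum_nil addr0.
have hs' : 0 <= s + bar a.
  move: h1; case: (a) => /=; first by lia.
  rewrite addr0 => h1; case: (s =P 0) h1 => [->|]; first by rewrite qint0 eqxx.
  by lia.
by rewrite psum_cons addrA; apply: IH.
Qed.

Lemma catalan_dco k w :
  (if catalan w then dco q k 0 w else 0) = (if psum w == 0 then dco q k 0 w else 0).
Proof.
rewrite /catalan; case: (psum w == 0); rewrite ?andbF ?andbT //.
case: allP => // H; case: (dco q k 0 w =P 0) => // /eqP nz.
exfalso; apply: H => i _; rewrite -(add0r (psum _)).
exact: (@dco_nonneg k 0 w (lexx 0) nz i).
Qed.

Lemma coef_Delta k n w :
  coef (Delta q k n) w = if (size w == 2 * n)%N && (psum w == 0) then dco q k 0 w else 0.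
Proof.
rewrite /coef /Delta big_map big_filter_cond /=.
rewrite big_mkcondl (eq_bigr (fun=> if catalan w then dco q k 0 w else 0)); last first.
  by move=> v /eqP ->.
rewrite sum_eq_const count_allwords catalan_dco.
by case: (size w == 2 * n)%N; rewrite ?mul1r ?mul0r.
Qed.

End Util.

Section Split.
Variable F : fieldType.
Variable q : F.

Lemma dco_cat k s u v : dco q k s (u ++ v) = dco q k s u * dco q k (s + psum u) v.
Proof.
elim: u s => [|a u IH] s /=; first by rewrite mul1r psum_nil addr0.
by rewrite IH psum_cons addrA mulrA.
Qed.

Lemma psum_nseq_x l : psum (nseq l lx) = l%:Z.
Proof. elim: l => [|l IH]; first by rewrite psum_nil. by rewrite /= psum_cons IH intS. Qed.

Lemma psum_nseq_y r : psum (nseq r ly) = - r%:Z.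
Proof.
elim: r => [|r IH]; first by rewrite psum_nil.
by rewrite /= psum_cons IH intS opprD.
Qed.

Lemma coef_Delta_split k j l r v :
  coef (Delta q k j) (nseq l lx ++ v ++ nseq r ly) =
  if (l <= j)%N then dco q k 0 (nseq l lx) * dco q k r%:Z (nseq r ly) * Pf q k l r (j - l) v
  else 0.
Proof.
rewrite coef_Delta /Pf.
have Hs : size (nseq l lx ++ v ++ nseq r ly) = (l + (count_mem lx v + count_mem ly v) + r)%N.
  by rewrite !size_cat !size_nseq size_count addnA.
have Hp : psum (nseq l lx ++ v ++ nseq r ly) =
   l%:Z + ((count_mem lx v)%:Z - (count_mem ly v)%:Z) - r%:Z.
  by rewrite !psum_cat psum_nseq_x psum_nseq_y psum_count addrA.
rewrite Hs Hp psum_count.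
case: leqP => hlj; last first.
  case: ifP => // /andP[/eqP h1 /eqP h2]; lia.
have -> : ((l + (count_mem lx v + count_mem ly v) + r == 2 * j)%N &&
   (l%:Z + ((count_mem lx v)%:Z - (count_mem ly v)%:Z) - r%:Z == 0)) =
  ((count_mem lx v == j - l)%N && (l%:Z + ((count_mem lx v)%:Z - (count_mem ly v)%:Z) == r%:Z)).
  by apply/idP/idP => /andP[/eqP h1 /eqP h2]; apply/andP; split; apply/eqP; lia.
case: ifP; rewrite ?mulr0 // => /andP[_ /eqP h].
rewrite !dco_cat add0r psum_nseq_x psum_count h.
by ring.
Qed.

Lemma dco_y_indep k k' s n : dco q k s (nseq n ly) = dco q k' s (nseq n ly).
Proof. by elim: n s => [|n IH] s //=; rewrite IH. Qed.

Lemma dco_y_S k (r : nat) : dco q k r.+1%:Z (nseq r.+1 ly) = qint q r.+1%:Z * dco q k r%:Z (nseq r ly).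
Proof. by rewrite /= addr0 intS addrAC subrr add0r. Qed.

Lemma dco_x_S k s n : dco q k s (nseq n.+1 lx) = qint q (s + k) * dco q k (s + 1) (nseq n lx).
Proof. by []. Qed.

Lemma dco_x_shift k s n : dco q k (s + 1) (nseq n lx) = dco q (k + 1) s (nseq n lx).
Proof.
elim: n s => [|n IH] s //=.
by rewrite IH addrAC addrA.
Qed.

End Split.

Section Series.
Variable F : fieldType.
Variable q : F.

Lemma coef_flatten (ss : seq (vec F)) w : coef (flatten ss) w = \sum_(s <- ss) coef s w.
Proof.
elim: ss => [|s ss IH] /=; first by rewrite coef_nil big_nil.
by rewrite coef_cat IH big_cons.
Qed.

Lemma coef_sshuffle (A B : series F) n w :
  coef (sshuffle q A B n) w = \sum_(0 <= i < n.+1) coef (vshuffle q (A i) (B (n - i)%N)) w.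
Proof. by rewrite /sshuffle coef_flatten big_map /index_iota subn0. Qed.

Lemma idx_sum (phi : nat -> nat -> F) n :
  \sum_(0 <= i < n.+1) (if (i < 2)%N then 0 else if odd (i - 2)%N then 0
       else if odd (n - i)%N then 0 else phi (i - 2)%N./2 (n - i)%N./2)
  = if odd n then 0 else \sum_(0 <= i < n./2) phi i (n./2 - 1 - i)%N.
Proof.
elim/ltn_ind: n phi => n IH phi.
move: IH; case: n => [|[|n]] IH.
- by rewrite big_nat1 /= big_geq.
- rewrite big_nat_cond big1 // => i /andP[/andP[_ hi] _].
  by rewrite hi.
rewrite big_nat_recr // big_nat_recr //=.
have -> : (if (n.+1 < 2)%N then 0 else if odd (n.+1 - 2)%N then 0
       else if odd (n.+2 - n.+1)%N then 0 else phi (n.+1 - 2)%N./2 (n.+2 - n.+1)%N./2) = 0 :> F.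
  rewrite subSnn /=; case: ifP => // _; by case: ifP.
rewrite addr0 subnn /= ?subn0 ?negbK.
rewrite (@eq_big_nat _ _ _ 0 n.+1 _ (fun i => (if (i < 2)%N then 0 else if odd (i - 2)%N then 0
       else if odd (n - i)%N then 0 else phi (i - 2)%N./2 (n - i)%N./2.+1))); last first.
  move=> i /andP[_]; rewrite ltnS => hi; rewrite (subSn (leqW hi)) (subSn hi) /= negbK.
  by [].
rewrite (IH n (ltnW (ltnSn _)) (fun a b => phi a b.+1)) ?negbK ?subn0.
rewrite (_ : (n.+2 - 2 = n)%N); last by rewrite !subSS subn0.
case: (odd n) => //=; first by rewrite addr0.
rewrite big_nat_recr //= !subn1 /= subnn; congr (_ + _).
apply: eq_big_nat => i /andP[_ hi].
by congr (phi i _); lia.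
Qed.

Lemma sum_shape (c d : F) (A : series F) (U : nat -> word) (T : vec F -> vec F)
  (g : word -> word) (D : series F) n w :
  (forall k, A k = [:: (1, U k)]) -> (forall V v, coef (T V) v = coef V (g v)) ->
  \sum_(0 <= i < n.+1) coef (vshuffle q (mult_t2 (subst2 c A) i) (smap T (subst2 d D) (n - i)%N)) w =
  if odd n then 0 else \sum_(0 <= i < n./2) c ^+ i * d ^+ (n./2 - 1 - i)%N *
        shf q (U i) (fun v => coef (D (n./2 - 1 - i)%N) (g v)) w.
Proof.
move=> HA HT.
rewrite -(idx_sum (fun a b => c ^+ a * d ^+ b * shf q (U a) (fun v => coef (D b) (g v)) w)).
apply: eq_bigr => i _.
rewrite /mult_t2; case: ifP => _; first by rewrite /vshuffle /= coef_nil.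
rewrite /subst2; case: ifP => _; first by rewrite /vshuffle /= coef_nil.
rewrite HA /vscale /= coef_vsh1 mulr1.
rewrite /smap (@shf_ext _ _ _ _ (fun v => coef (subst2 d D (n - i)%N) (g v))); last by move=> v; rewrite HT.
rewrite /subst2; case: ifP => _.
  by rewrite shf_zero ?mulr0 // => v; rewrite coef_nil.
rewrite (@shf_ext _ _ _ _ (fun v => d ^+ (n - i)./2 * coef (D (n - i)./2) (g v))); last first.
  by move=> v; rewrite coef_scale.
by rewrite shf_scale mulrA.
Qed.

End Series.

Arguments alpha {F} q m a N i.
Arguments beta {F} q m a N i.

Section Consts.
Variable F : fieldType.
Variable q : F.
Hypothesis hq : q != 0.
Hypothesis hq2 : q * q - 1 != 0.

Ltac qnorm2 := rewrite /alpha /beta /qint;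
  rewrite ?intS ?(mulrDl, mulrDr, opprD, opprK, mulNr, mulrN, mul1r, mulr1);
  rewrite ?expfzDr //; rewrite -?invr_expz ?expr1z ?exprS -?exprnP.
Ltac qfield2 := field; rewrite ?hq ?hq2 ?expfz_neq0 ?expf_neq0 //.

Lemma dco_x_last k n : dco q k 0 (nseq n.+1 lx) = dco q k 0 (nseq n lx) * qint q (n%:Z + k).
Proof.
have -> : nseq n.+1 lx = nseq n lx ++ [:: lx] by elim: n => //= n ->.
by rewrite dco_cat add0r psum_nseq_x /= mulr1.
Qed.

Lemma DX1 (m l : nat) :
  dco q (- m%:Z - 1) 0 (nseq l lx) * qint q (m%:Z - l%:Z + 1) =
  qint q (m.+1)%:Z * dco q (- m%:Z) 0 (nseq l lx).
Proof.
case: l => [|l].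
  by rewrite /= mul1r mulr1 subr0 intS addrC.
rewrite dco_x_S add0r dco_x_shift subrK dco_x_last.
have -> : m%:Z - l.+1%:Z + 1 = - (l%:Z - m%:Z) by lia.
have -> : - m%:Z - 1 = - (m.+1)%:Z by lia.
rewrite !qint_opp; ring.
Qed.

Lemma DX2 (m l : nat) :
  dco q (- m%:Z - 1) 0 (nseq l.+1 lx) = qint q (- m%:Z - 1) * dco q (- m%:Z) 0 (nseq l lx).
Proof. by rewrite dco_x_S add0r dco_x_shift subrK. Qed.

Lemma constW (m l N i j : nat) (dX dX' : F) :
  (j + i.+1 = N + l)%N ->
  dX' * qint q (m%:Z - l%:Z + 1) = qint q (m.+1)%:Z * dX ->
  (-1) ^+ (N + l) * dX' * alpha q m%:Z l%:Z N i =
  q ^ (2 * l%:Z) * qint q (m.+1)%:Z * ((q ^+ m) ^+ i * (- q^-1) ^+ j) * dX.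
Proof.
move=> H DX.
have Hs : (-1) ^+ (N + l) = (-1) ^+ j * (-1) ^+ i.+1 :> F by rewrite -exprD H.
have HN : N%:Z = j%:Z + i%:Z + 1 - l%:Z by lia.
rewrite Hs /alpha.
transitivity ((-1) ^+ j * ((-1) ^+ i.+1 * (-1) ^+ i.+1) *
   q ^ ((m%:Z + 1) * i%:Z - N%:Z + l%:Z + 1) * (dX' * qint q (m%:Z - l%:Z + 1))); first by ring.
rewrite DX -exprMn mulrNN mulr1 expr1n mulr1 [(- q^-1) ^+ _]exprNn exprVn -exprM HN.
have -> : q ^+ (m * i) = q ^ (m%:Z * i%:Z) by rewrite -PoszM.
move: (qint q (m.+1)%:Z) => K.
qnorm2. qfield2.
Qed.

Lemma constG (m l N i j : nat) (dXl : F) :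
  (j + i.+1 = N + l.+1)%N ->
  (-1) ^+ (N + l.+1) * (qint q (- m%:Z - 1) * dXl) * beta q m%:Z l.+1%:Z N i =
  q ^ l%:Z * qint q l.+1%:Z * qint q (m.+1)%:Z * ((q ^+ m) ^+ i * (- q^-1) ^+ j) * dXl.
Proof.
move=> H.
have Hs : (-1) ^+ (N + l.+1) = (-1) ^+ j * (-1) ^+ i.+1 :> F by rewrite -exprD H.
have HN : N%:Z = j%:Z + i%:Z - l%:Z by lia.
have -> : - m%:Z - 1 = - (m.+1)%:Z by lia.
rewrite Hs /beta qint_opp.
transitivity ((-1) ^+ j * ((-1) ^+ i * (-1) ^+ i) *
   q ^ ((m%:Z + 1) * i%:Z - N%:Z) * qint q l.+1%:Z * qint q (m.+1)%:Z * dXl); first by rewrite exprS; ring.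
rewrite -exprMn mulrNN mulr1 expr1n mulr1 [(- q^-1) ^+ _]exprNn exprVn -exprM HN.
have -> : q ^+ (m * i) = q ^ (m%:Z * i%:Z) by rewrite -PoszM.
move: (qint q (m.+1)%:Z) (qint q l.+1%:Z) => K L.
qnorm2. qfield2.
Qed.

End Consts.

Section First.
Variable F : fieldType.
Variable q : F.
Hypothesis hq : q != 0.
Hypothesis hq2 : q * q - 1 != 0.

Lemma shf_Delta u k j l r w :
  shf q u (fun v => coef (Delta q k j) (nseq l lx ++ v ++ nseq r ly)) w =
  if (l <= j)%N then dco q k 0 (nseq l lx) * dco q k r%:Z (nseq r ly) * shf q u (Pf q k l r (j - l)) w
  else 0.
Proof.
case: leqP => h.
  rewrite -shf_scale; apply: shf_ext => v; by rewrite coef_Delta_split h.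
by apply: shf_zero => v; rewrite coef_Delta_split leqNgt h.
Qed.

Lemma first_id (m l r : nat) : (1 <= r)%N ->
  series_eq
    (smap (fun v => lexp lx (- l%:Z) (rexp ly (- r%:Z) v))
          (subst2 (-1) (DeltaS q (- m%:Z - 1))))
    (sadd
      (sscale (q ^ (2 * l%:Z) * qint q (m.+1)%:Z)
        (sshuffle q (mult_t2 (subst2 (q ^+ m) (Wm F)))
           (smap (fun v => lexp lx (- l%:Z) (rexp ly (1 - r%:Z) v))
                 (subst2 (- q^-1) (DeltaS q (- m%:Z))))))
      (sscale (q ^ (l%:Z - 1) * qint q l%:Z * qint q (m.+1)%:Z)
        (sshuffle q (mult_t2 (subst2 (q ^+ m) (G F)))
           (smap (fun v => lexp lx (1 - l%:Z) (rexp ly (1 - r%:Z) v))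
                 (subst2 (- q^-1) (DeltaS q (- m%:Z))))))).
Proof.
case: r => [//|r] _ n w.
have Er : 1 - r.+1%:Z = - r%:Z by lia.
rewrite Er.
have -> : coef (smap (fun v => lexp lx (- l%:Z) (rexp ly (- r.+1%:Z) v))
          (subst2 (-1) (DeltaS q (- m%:Z - 1))) n) w =
   if odd n then 0 else (-1) ^+ n./2 * coef (Delta q (- m%:Z - 1) n./2) (nseq l lx ++ w ++ nseq r.+1 ly).
  rewrite /smap /subst2; case: ifP => _; rewrite coef_lexpN coef_rexpN ?coef_nil //.
  by rewrite coef_scale -catA.
rewrite /sadd coef_cat /sscale !coef_scale !coef_sshuffle.
rewrite (@sum_shape _ _ _ _ _ Wi _ (fun v => nseq l lx ++ v ++ nseq r ly)) //; last first.
  by move=> V v; rewrite coef_lexpN coef_rexpN catA.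
set GS := (X in _ = _ + X).
have HG : GS = if odd n then 0 else
   (if l is l'.+1 then q ^ (l%:Z - 1) * qint q l%:Z * qint q (m.+1)%:Z *
     \sum_(0 <= i < n./2) (q ^+ m) ^+ i * (- q^-1) ^+ (n./2 - 1 - i)%N *
       (if (l' <= n./2 - 1 - i)%N then dco q (- m%:Z) 0 (nseq l' lx) * dco q (- m%:Z) r%:Z (nseq r ly) *
          shf q (Gi i) (Pf q (- m%:Z) l' r (n./2 - 1 - i - l')) w else 0)
    else 0).
  rewrite /GS; case: l {Er GS} => [|l].
    by rewrite qint0 mulr0 !mul0r; case: ifP.
  have El : 1 - l.+1%:Z = - l%:Z by lia.
  rewrite El (@sum_shape _ _ _ _ _ Gi _ (fun v => nseq l lx ++ v ++ nseq r ly)) //; last first.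
    by move=> V v; rewrite coef_lexpN coef_rexpN catA.
  case: ifP => _; rewrite ?mulr0 //; congr (_ * _); apply: eq_bigr => i _.
  by rewrite shf_Delta.
rewrite HG; clear HG GS.
case: ifP => hodd; first by rewrite mulr0 add0r.
under eq_bigr => i _ do rewrite shf_Delta.
rewrite coef_Delta_split.
move: (n./2) => n2.
case: (leqP l n2) => hl; last first.
  rewrite mulr0 big_nat_cond big1 ?mulr0 ?add0r; last first.
    move=> i /andP[/andP[_ hi] _]; rewrite leqNgt (_ : (n2 - 1 - i < l)%N) ?mulr0 //; lia.
  case: l hl {Er} => [//|l] hl.
  rewrite big_nat_cond big1 ?mulr0 //.
  move=> i /andP[/andP[_ hi] _]; rewrite leqNgt (_ : (n2 - 1 - i < l)%N) ?mulr0 //; lia.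
have [N ->] : exists N, n2 = (N + l)%N by exists (n2 - l)%N; rewrite subnK.
rewrite addnK.
rewrite (@dco_y_S F q (- m%:Z - 1) r) (@dco_y_indep F q (- m%:Z - 1) (- m%:Z)).
have E : forall a b c d e : F, a * (b * (c * d) * e) = a * b * d * (c * e) by move=> *; ring.
rewrite E (@key F q hq hq2 m%:Z r.+1%:Z w l%:Z N).
have -> : r.+1%:Z - 1 = r%:Z by lia.
rewrite mulrDr; congr (_ + _).
  rewrite (big_cat_nat _ (leq_addr l N)) //= [X in _ = _ * (_ + X)]big_nat_cond [X in _ = _ * (_ + X)]big1 ?addr0; last first.
    move=> i /andP[/andP[hi hi'] _]; rewrite leqNgt (_ : (N + l - 1 - i < l)%N) ?mulr0 //; lia.
  rewrite !mulr_sumr; apply: eq_big_nat => i /andP[_ hi].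
  rewrite ifT; last by lia.
  have -> : (N + l - 1 - i - l = N - i.+1)%N by lia.
  transitivity ((-1) ^+ (N + l) * dco q (- m%:Z - 1) 0 (nseq l lx) * alpha q m l N i *
     (dco q (- m%:Z) r (nseq r ly) * shf q (Wi i) (Pf q (- m%:Z) l r (N - i.+1)) w)); first by ring.
  have Hj : ((N + l - 1 - i) + i.+1 = N + l)%N by lia.
  rewrite (@constW F q hq hq2 m l N i (N + l - 1 - i)%N _ _ Hj (@DX1 F q hq hq2 m l)).
  by ring.
case: l {hl Er} => [|l].
  rewrite big1 ?mulr0 // => i _.
  by rewrite /beta qint0 mulr0 mul0r.
rewrite (_ : l.+1%:Z - 1 = l%:Z); last by lia.
rewrite (big_cat_nat _ (_ : (N.+1 <= N + l.+1)%N)) //=; last by lia.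
rewrite [X in _ = _ * (_ + X)]big_nat_cond [X in _ = _ * (_ + X)]big1 ?addr0; last first.
  move=> i /andP[/andP[hi hi'] _]; rewrite leqNgt (_ : (N + l.+1 - 1 - i < l)%N) ?mulr0 //; lia.
rewrite !mulr_sumr; apply: eq_big_nat => i /andP[_ hi].
rewrite ifT; last by lia.
have -> : (N + l.+1 - 1 - i - l = N - i)%N by lia.
rewrite (@dco_x_shift F q) subrK add0r.
transitivity ((-1) ^+ (N + l.+1) * (qint q (- m%:Z - 1) * dco q (- m%:Z) 0 (nseq l lx)) *
   beta q m l.+1 N i *
   (dco q (- m%:Z) r (nseq r ly) * shf q (Gi i) (Pf q (- m%:Z) l r (N - i)) w)); first by ring.
have Hj : ((N + l.+1 - 1 - i) + i.+1 = N + l.+1)%N by lia.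
rewrite (@constG F q hq hq2 m l N i (N + l.+1 - 1 - i)%N _ Hj).
by ring.
Qed.

End First.

Section Swap.
Variable F : fieldType.
Variable q : F.

Definition sw (w : word) : word := map swap_letter w.
Definition vsw (V : vec F) : vec F := [seq (p.1, sw p.2) | p <- V].

Lemma swap_letterK : involutive swap_letter. Proof. by case. Qed.
Lemma swK : involutive sw. Proof. by move=> s; rewrite /sw -map_comp map_id_in // => a _ /=; rewrite swap_letterK. Qed.

Lemma coef_vsw V w : coef (vsw V) w = coef V (sw w).
Proof.
rewrite /coef /vsw big_map; apply: eq_bigl => p /=.
by apply/eqP/eqP => [<-|->]; rewrite swK.
Qed.

Lemma vsw_cat U V : vsw (U ++ V) = vsw U ++ vsw V.
Proof. by rewrite /vsw map_cat. Qed.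

Lemma vsw_scale c V : vscale c (vsw V) = vsw (vscale c V).
Proof. by rewrite /vscale /vsw -!map_comp. Qed.

Lemma vsw_lcons a V : lcons (swap_letter a) (vsw V) = vsw (lcons a V).
Proof. by rewrite /lcons /vsw -!map_comp. Qed.

Lemma sw_nseq a n : sw (nseq n a) = nseq n (swap_letter a).
Proof. by rewrite /sw map_nseq. Qed.

Lemma ldel1_sw a V : ldel1 (swap_letter a) (vsw V) = vsw (ldel1 a V).
Proof.
elim: V => [|[c s] V IH] //.
move: IH; rewrite /ldel1 /vsw /= => IH.
have -> : (ohead (sw s) == Some (swap_letter a)) = (ohead s == Some a).
  by clear IH; case: s => [|b s] //=; case: a; case: b.
by case: ifP => _ /=; rewrite IH // /sw behead_map.
Qed.

Lemma rdel1_sw a V : rdel1 (swap_letter a) (vsw V) = vsw (rdel1 a V).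
Proof.
elim: V => [|[c s] V IH] //.
move: IH; rewrite /rdel1 /vsw /= => IH.
have -> : (ohead (rev (sw s)) == Some (swap_letter a)) = (ohead (rev s) == Some a).
  by clear IH; rewrite /sw -map_rev; case: (rev s) => [|b t] //=; case: a; case: b.
by case: ifP => _ /=; rewrite IH // /sw -map_rev behead_map map_rev.
Qed.

Lemma lexp_sw a e V : lexp (swap_letter a) e (vsw V) = vsw (lexp a e V).
Proof.
case: e => [n|n] /=.
  by rewrite /vsw -!map_comp; apply: eq_map => -[c s] /=; rewrite /sw map_cat map_nseq.
have H : forall k, iter k (ldel1 (swap_letter a)) (vsw V) = vsw (iter k (ldel1 a) V).
  by elim=> //= k ->; rewrite ldel1_sw.
exact: (H n.+1).
Qed.

Lemma rexp_sw a e V : rexp (swap_letter a) e (vsw V) = vsw (rexp a e V).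
Proof.
case: e => [n|n] /=.
  by rewrite /vsw -!map_comp; apply: eq_map => -[c s] /=; rewrite /sw map_cat map_nseq.
have H : forall k, iter k (rdel1 (swap_letter a)) (vsw V) = vsw (iter k (rdel1 a) V).
  by elim=> //= k ->; rewrite rdel1_sw.
exact: (H n.+1).
Qed.

Lemma pairing_sw a b : pairing (swap_letter a) (swap_letter b) = pairing a b.
Proof. by case: a; case: b. Qed.

Lemma wsh_cons_cons a u b v : wshuffle q (a :: u) (b :: v) =
  lcons a (wshuffle q u (b :: v)) ++ vscale (q ^ pw b (a :: u)) (lcons b (wshuffle q (a :: u) v)).
Proof. by []. Qed.

Lemma pw_sw b s : pw (swap_letter b) (sw s) = pw b s.
Proof. by rewrite /pw /sw big_map; apply: eq_bigr => c _; rewrite pairing_sw. Qed.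

Lemma wshuffle_sw u v : wshuffle q (sw u) (sw v) = vsw (wshuffle q u v).
Proof.
elim: u v => [|a u IHu] v; first by [].
elim: v => [|b v IHv]; first by [].
rewrite -[sw (a :: u)]/(swap_letter a :: sw u) -[sw (b :: v)]/(swap_letter b :: sw v) !wsh_cons_cons.
rewrite vsw_cat -vsw_scale -!vsw_lcons -IHv -IHu.
by rewrite -(pw_sw b (a :: u)).
Qed.

Lemma vshuffle_sw U V : vshuffle q (vsw U) (vsw V) = vsw (vshuffle q U V).
Proof.
rewrite /vshuffle; elim: U => [|a U IH] //=.
rewrite !flatten_cat vsw_cat IH; congr (_ ++ _).
elim: V {IH} => [|b V IHV] //=.
by rewrite vsw_cat IHV wshuffle_sw vsw_scale.
Qed.

Definition ssw (A : series F) : series F := fun n => vsw (A n).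

Lemma sshuffle_sw A B A' B' n : (forall k, A' k = vsw (A k)) -> (forall k, B' k = vsw (B k)) ->
  sshuffle q A' B' n = vsw (sshuffle q A B n).
Proof.
move=> HA HB; rewrite /sshuffle /vsw map_flatten -map_comp; congr flatten.
by apply: eq_map => i /=; rewrite HA HB vshuffle_sw.
Qed.

Lemma subst2_sw c A A' n : (forall k, A' k = vsw (A k)) -> subst2 c A' n = vsw (subst2 c A n).
Proof. by move=> HA; rewrite /subst2; case: ifP => // _; rewrite HA vsw_scale. Qed.

Lemma mult_t2_sw A A' n : (forall k, A' k = vsw (A k)) -> mult_t2 A' n = vsw (mult_t2 A n).
Proof. by move=> HA; rewrite /mult_t2; case: ifP => // _; rewrite HA. Qed.

Lemma sscale_sw c A A' n : (forall k, A' k = vsw (A k)) -> sscale c A' n = vsw (sscale c A n).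
Proof. by move=> HA; rewrite /sscale HA vsw_scale. Qed.

Lemma sadd_sw A B A' B' n : (forall k, A' k = vsw (A k)) -> (forall k, B' k = vsw (B k)) ->
  sadd A' B' n = vsw (sadd A B n).
Proof. by move=> HA HB; rewrite /sadd HA HB vsw_cat. Qed.

Lemma smap_sw f g A A' n : (forall V, f (vsw V) = vsw (g V)) -> (forall k, A' k = vsw (A k)) ->
  smap f A' n = vsw (smap g A n).
Proof. by move=> Hf HA; rewrite /smap HA Hf. Qed.

Lemma Wp_sw k : Wp F k = vsw (Wm F k).
Proof. by rewrite /Wp /Wm /vsw /= /sw /= map_flatten map_nseq. Qed.

Lemma Gt_sw k : Gt F k = vsw (G F k).
Proof. by rewrite /Gt /G /vsw /= /sw /= map_flatten map_nseq. Qed.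

Lemma Deltat_sw k n : DeltatS q k n = vsw (DeltaS q k n).
Proof. by []. Qed.

End Swap.
Arguments vsw {F} V.

Theorem lemma6p7 (F : fieldType) (q : F) (m l r : nat) :
  [pchar F] =i pred0 -> q != 0 -> (forall n : nat, (0 < n)%N -> q ^+ n != 1) ->
  (l <= m)%N -> (1 <= r)%N -> (r <= m)%N ->
  series_eq
    (smap (fun v => lexp lx (- l%:Z) (rexp ly (- r%:Z) v))
          (subst2 (-1) (DeltaS q (- m%:Z - 1))))
    (sadd
      (sscale (q ^ (2 * l%:Z) * qint q (m.+1)%:Z)
        (sshuffle q (mult_t2 (subst2 (q ^+ m) (Wm F)))
           (smap (fun v => lexp lx (- l%:Z) (rexp ly (1 - r%:Z) v))
                 (subst2 (- q^-1) (DeltaS q (- m%:Z))))))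
      (sscale (q ^ (l%:Z - 1) * qint q l%:Z * qint q (m.+1)%:Z)
        (sshuffle q (mult_t2 (subst2 (q ^+ m) (G F)))
           (smap (fun v => lexp lx (1 - l%:Z) (rexp ly (1 - r%:Z) v))
                 (subst2 (- q^-1) (DeltaS q (- m%:Z)))))))
  /\
  series_eq
    (smap (fun v => lexp ly (- l%:Z) (rexp lx (- r%:Z) v))
          (subst2 (-1) (DeltatS q (- m%:Z - 1))))
    (sadd
      (sscale (q ^ (2 * l%:Z) * qint q (m.+1)%:Z)
        (sshuffle q (mult_t2 (subst2 (q ^+ m) (Wp F)))
           (smap (fun v => lexp ly (- l%:Z) (rexp lx (1 - r%:Z) v))
                 (subst2 (- q^-1) (DeltatS q (- m%:Z))))))
      (sscale (q ^ (l%:Z - 1) * qint q l%:Z * qint q (m.+1)%:Z)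
        (sshuffle q (mult_t2 (subst2 (q ^+ m) (Gt F)))
           (smap (fun v => lexp ly (1 - l%:Z) (rexp lx (1 - r%:Z) v))
                 (subst2 (- q^-1) (DeltatS q (- m%:Z))))))).
Proof.
move=> _ hq hroot _ hr _.
have hq2 : q * q - 1 != 0 by rewrite subr_eq0 -expr2; exact: hroot.
have H1 := @first_id F q hq hq2 m l r hr.
split; first exact: H1.
move=> n w.
have Hf : forall (e1 e2 : int) (V : vec F),
    lexp ly e1 (rexp lx e2 (vsw V)) = vsw (lexp lx e1 (rexp ly e2 V)).
  move=> e1 e2 V.
  have E1 : rexp lx e2 (vsw V) = vsw (rexp ly e2 V) := @rexp_sw F ly e2 V.
  have E2 : lexp ly e1 (vsw (rexp ly e2 V)) = vsw (lexp lx e1 (rexp ly e2 V)) :=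
    @lexp_sw F lx e1 (rexp ly e2 V).
  by rewrite E1 E2.
have HD : forall k j, DeltatS q k j = vsw (DeltaS q k j) by [].
rewrite (@smap_sw F _ (fun v => lexp lx (- l%:Z) (rexp ly (- r%:Z) v))
           (subst2 (-1) (DeltaS q (- m%:Z - 1)))); last first.
    by move=> k; apply: subst2_sw.
  by move=> V; apply: Hf.
rewrite (@sadd_sw F
   (sscale (q ^ (2 * l%:Z) * qint q (m.+1)%:Z)
        (sshuffle q (mult_t2 (subst2 (q ^+ m) (Wm F)))
           (smap (fun v => lexp lx (- l%:Z) (rexp ly (1 - r%:Z) v))
                 (subst2 (- q^-1) (DeltaS q (- m%:Z))))))
   (sscale (q ^ (l%:Z - 1) * qint q l%:Z * qint q (m.+1)%:Z)
        (sshuffle q (mult_t2 (subst2 (q ^+ m) (G F)))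
           (smap (fun v => lexp lx (1 - l%:Z) (rexp ly (1 - r%:Z) v))
                 (subst2 (- q^-1) (DeltaS q (- m%:Z))))))); last 2 first.
- move=> k; apply: sscale_sw => j; apply: sshuffle_sw => i.
    by apply: mult_t2_sw => i'; apply: subst2_sw => i''; apply: Wp_sw.
  apply: smap_sw => [V|i']; first by apply: Hf.
  by apply: subst2_sw.
- move=> k; apply: sscale_sw => j; apply: sshuffle_sw => i.
    by apply: mult_t2_sw => i'; apply: subst2_sw => i''; apply: Gt_sw.
  apply: smap_sw => [V|i']; first by apply: Hf.
  by apply: subst2_sw.
by rewrite !coef_vsw; apply: H1.
Qed.
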